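(* For all distributions $\mu_1,\mu_2,\nu_2$ on $\mathbb{C}[x]$ one has $$\mu_1 \rhd_{\nu_2}\mu_2 = \mu_1 \,{}_{\delta_1}\!\boxtimes_{\nu_2}\mu_2 ,$$ where the left side is the left component of the multiplicative conditionally monotone convolution and the right side is the left component of the multiplicative conditionally free convolution $(\mu_1,\delta_1)\boxtimes_c(\mu_2,\nu_2)$.
   Context: A distribution is a unital linear functional on $\mathbb{C}[x]$. An algebraic probability space $(\mathcal{A},\varphi,\psi)$ is a unital complex algebra with two unital linear functionals. For $X\in\mathcal{A}$ let $\mu_X(x^n)=\varphi(X^n)$ and $\nu_X(x^n)=\psi(X^n)$. The distribution $\delta_1$ is given by $\delta_1(x^n)=1$ for all $n\ge 0$. Conditionally monotone (c-monotone) independence. Let $I$ be a linearly ordered set and let $\{\mathcal{A}_i\}_{i\in I}$ be subalgebras of $\mathcal{A}$, none containing the unit. They are c-monotone independent if for all $n\ge1$, indices $i_1,\dots,i_n$ and $X_k\in\mathcal{A}_{i_k}$: (1) $\varphi(X_1\cdots X_n)=\varphi(X_1)\varphi(X_2\cdots X_n)$ whenever $i_1>i_2$; (2) $\varphi(X_1\cdots X_n)=\varphi(X_1\cdots X_{n-1})\varphi(X_n)$ whenever $i_n>i_{n-1}$; (3) $\varphi(X_1\cdots X_n)=(\varphi(X_j)-\psi(X_j))\varphi(X_1\cdots X_{j-1})\varphi(X_{j+1}\cdots X_n)+\psi(X_j)\varphi(X_1\cdots X_{j-1}X_{j+1}\cdots X_n)$ whenever $2\le j\le n-1$ and $i_{j-1}<i_j>i_{j+1}$;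 (4) conditions (1)–(3) also hold with $\varphi$ replaced by $\psi$ everywhere (monotone independence with respect to $\psi$). Elements are c-monotone independent if the non-unital subalgebras they generate are. Multiplicative c-monotone convolution: if $X,Y\in\mathcal{A}$ are such that $X-1$ and $Y$ are c-monotone independent (the algebra of $X-1$ preceding that of $Y$), the pair $(\mu_{XY},\nu_{XY})$ is denoted $(\mu_X,\nu_X)\rhd_c(\mu_Y,\nu_Y)$. Its left component depends only on $\mu_X,\mu_Y,\nu_Y$ and is denoted $\mu_X\rhd_{\nu_Y}\mu_Y$. Its right component is the multiplicative monotone convolution $\nu_X\rhd\nu_Y$. The convolution is defined for arbitrary distributions by realizing them in such a space. Conditionally free (c-free) independence: subalgebras $\{\mathcal{A}_i\}$ of $(\mathcal{A},\varphi,\psi)$ are c-free if they are freely independent with respect to $\psi$ and $\varphi(X_1\cdots X_n)=\prod_k\varphi(X_k)$ whenever $X_k\in\mathcal{A}_{i_k}$, $i_1\ne i_2\ne\cdots\ne i_n$ and $\psi(X_k)=0$ for all $k$. If $X,Y$ are c-free, $(\mu_{XY},\nu_{XY})$ depends only on $(\mu_X,\nu_X)$ and $(\mu_Y,\nu_Y)$. It is denoted $(\mu_X,\nu_X)\boxtimes_c(\mu_Y,\nu_Y)=(\mu_X\,{}_{\nu_X}\!\boxtimes_{\nu_Y}\mu_Y,\ \nu_X\boxtimes\nu_Y)$. *)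

(* Defs.v *)
From HB Require Import structures.
From mathcomp Require Import all_boot all_order all_algebra.
From mathcomp Require Import complex.
From mathcomp Require Export reals.
Set Implicit Arguments. Unset Strict Implicit. Unset Printing Implicit Defensive.
Import Order.TTheory GRing.Theory Num.Theory.
Local Open Scope ring_scope.

Section Defs.
Variable C : comNzRingType.
Variable A : algType C.

(* The non-unital subalgebra generated by X: span of X, X^2, X^3, ... *)
Definition nu_gen (X : A) (a : A) : Prop :=
  exists (n : nat) (c : nat -> C), a = \sum_(i < n) c i *: X ^+ i.+1.

Definition u_gen (X : A) (a : A) : Prop :=
  exists (n : nat) (c : nat -> C), a = \sum_(i < n) c i *: X ^+ i.

Definition wprod {I : Type} (w : seq (I * A)) : A := \prod_(p <- w) p.2.

(* conditions (1)-(3) of c-monotone independence, for the functional f,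
   with g playing the role of psi in condition (3) *)
Definition mon_conds {d} {I : orderType d} (f g : A -> C) (S : I -> A -> Prop) : Prop :=
  forall w : seq (I * A), (forall p, p \in w -> S p.1 p.2) ->
  [/\
      (forall i1 X1 i2 X2 r, w = [:: (i1, X1), (i2, X2) & r] -> (i2 < i1)%O ->
         f (wprod w) = f X1 * f (wprod ((i2, X2) :: r))),
      (forall l i1 X1 i2 X2, w = l ++ [:: (i1, X1); (i2, X2)] -> (i1 < i2)%O ->
         f (wprod w) = f (wprod (rcons l (i1, X1))) * f X2) &
      (forall l a Xa j Xj b Xb r, w = l ++ [:: (a, Xa), (j, Xj), (b, Xb) & r] ->
         (a < j)%O -> (b < j)%O ->
         f (wprod w) = (f Xj - g Xj) * f (wprod (rcons l (a, Xa))) * f (wprod ((b, Xb) :: r))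
                       + g Xj * f (wprod (l ++ [:: (a, Xa), (b, Xb) & r])))].

(* c-monotone independence of the family S w.r.t. (phi, psi): conditions (1)-(3)
   for phi, and (4) = conditions (1)-(3) with phi replaced by psi everywhere *)
Definition cmon_indep {d} {I : orderType d} (phi psi : A -> C) (S : I -> A -> Prop) : Prop :=
  mon_conds phi psi S /\ mon_conds psi psi S.

Definition alt_centered {I : eqType} (psi : A -> C) (S : I -> A -> Prop) (w : seq (I * A)) :=
  [/\ (forall p, p \in w -> S p.1 p.2), w != [::],
      all (fun p => psi p.2 == 0) w &
      forall l i1 X1 i2 X2 r, w = l ++ [:: (i1, X1), (i2, X2) & r] -> i1 != i2].

Definition cfree_indep {I : eqType} (phi psi : A -> C) (S : I -> A -> Prop) : Prop :=
  forall w : seq (I * A), alt_centered psi S w ->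
    psi (wprod w) = 0 /\ phi (wprod w) = \prod_(p <- w) phi p.2.

End Defs.

(* two-member family indexed by bool, with false < true *)
Definition fam2 (T : Type) (P Q : T -> Prop) : bool -> T -> Prop :=
  fun b => if b then Q else P.

(* Main.v *)
Require Import Defs.
From HB Require Import structures.
From mathcomp Require Import all_boot all_order all_algebra.
From mathcomp Require Import complex.
From mathcomp Require Import reals.
From mathcomp Require Import ring.
Import Order.TTheory GRing.Theory Num.Theory.
Local Open Scope ring_scope.

Fixpoint altb {T : Type} (w : seq (bool * T)) : bool :=
  if w is p :: r then (if r is q :: _ then (p.1 != q.1) && altb r else true) else true.

Lemma altb_cons {T : Type} (a : bool * T) s :
  altb (a :: s) = (if s is q :: _ then a.1 != q.1 else true) && altb s.
Proof. by case: s. Qed.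

Lemma altb_tail {T : Type} (a : bool * T) s : altb (a :: s) -> altb s.
Proof. by rewrite altb_cons => /andP[]. Qed.

Lemma altb_cat {T : Type} (l r : seq (bool * T)) : altb (l ++ r) -> altb l && altb r.
Proof.
elim: l => [//|a l IH].
case: l IH => [|b l] IH.
  by move/altb_tail.
rewrite cat_cons altb_cons => /andP[h /IH /andP[h1 h2]].
by rewrite altb_cons h h1 h2.
Qed.

Lemma altb_adj {T : Type} (l r : seq (bool * T)) p q :
  altb (l ++ p :: q :: r) -> p.1 != q.1.
Proof. by move/altb_cat=> /andP[_] /= /andP[]. Qed.
Arguments altb_adj {T l r p q}.

Lemma altb_map {T U : Type} (f : bool * T -> U) w :
  altb (map (fun p => (p.1, f p)) w) = altb w.
Proof.
elim: w => [//|a w IH] /=; rewrite IH; by case: w {IH}.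
Qed.

Lemma altb_nalt {T : Type} (w : seq (bool * T)) : ~~ altb w ->
  exists l p q r, w = l ++ p :: q :: r /\ p.1 = q.1.
Proof.
elim: w => [//|a w IH].
case: w IH => [//|b w] IH /=.
case: (eqVneq a.1 b.1) => [e _|ne /= /IH [l [p [q [r [-> e]]]]]].
  by exists [::], a, b, w.
by exists (a :: l), p, q, r.
Qed.

Lemma altb_fst {T : Type} (l r : seq (bool * T)) p p' : p.1 = p'.1 ->
  altb (l ++ p :: r) = altb (l ++ p' :: r).
Proof.
move=> e; elim: l => [|a l IH].
  by rewrite !cat0s !altb_cons e.
rewrite !cat_cons !altb_cons IH; case: l {IH} => //=; by rewrite e.
Qed.

Lemma altb_merge {T : Type} (u r : seq (bool * T)) a y q m :
  a.1 = q.1 -> m.1 = a.1 -> altb (u ++ a :: y :: q :: r) -> altb (u ++ m :: r).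
Proof.
move=> aq ma; elim: u => [|b u IH].
  rewrite !cat0s !altb_cons => /andP[_ /andP[_]]; rewrite ma aq; by case: r.
rewrite !cat_cons !altb_cons => /andP[h /IH ->]; rewrite andbT.
by case: u {IH} h => //=; rewrite ma.
Qed.

Fixpoint mergeW {B : nzRingType} (u u' : seq (bool * B)) : seq (bool * B) :=
  match u with
  | [::] => u'
  | a :: u0 => if u0 is _ :: _ then a :: mergeW u0 u'
               else (if u' is q :: u'' then (a.1, a.2 * q.2) :: u'' else [:: a])
  end.

Section Merge.
Variables (K : comNzRingType) (B : algType K).
Implicit Types u l r : seq (bool * B).

Lemma wprod_cat u r : wprod (u ++ r) = wprod u * wprod r.
Proof. by rewrite /wprod big_cat. Qed.
Lemma wprod_cons p u : wprod (p :: u) = p.2 * wprod u.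
Proof. by rewrite /wprod big_cons. Qed.
Lemma wprod_nil : wprod ([::] : seq (bool * B)) = 1.
Proof. by rewrite /wprod big_nil. Qed.

Lemma mergeW_prod u r : wprod (mergeW u r) = wprod u * wprod r.
Proof.
elim: u => [|a u IH] /=; first by rewrite wprod_nil mul1r.
case: u IH => [|b u] IH.
  case: r {IH} => [|q r]; rewrite !wprod_cons ?wprod_nil ?mulr1 //.
  by rewrite /= mulrA.
by rewrite !wprod_cons IH wprod_cons mulrA.
Qed.

Lemma mergeW_catr u r t : r != [::] -> mergeW u (r ++ t) = mergeW u r ++ t.
Proof.
move=> nr; elim: u => [//|a u IH] /=.
case: u IH => [|b u] IH; last by rewrite IH.
by case: r nr {IH}.
Qed.

Lemma mergeW_catl l u r : u != [::] -> mergeW (l ++ u) r = l ++ mergeW u r.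
Proof.
move=> nu; elim: l => [//|a l IH] /=; rewrite IH.
by case: l {IH} => [|b l] /=; case: u nu.
Qed.
Lemma mergeW_cons a u r : u != [::] -> mergeW (a :: u) r = a :: mergeW u r.
Proof. by case: u. Qed.
End Merge.

Section Ugen.
Variables (K : comNzRingType) (B : algType K).

Lemma hsum (x : B) (p : {poly K}) : horner_alg x p = \sum_(i < size p) p`_i *: x ^+ i.
Proof.
rewrite -[in LHS](coefK p) poly_def linear_sum /=; apply: eq_bigr => i _.
by rewrite linearZ /= mulr_algl rmorphXn /= horner_algX.
Qed.

Lemma fsum (f : {linear B -> K^o}) (x : B) n (c : nat -> K) :
  f (\sum_(i < n) c i *: x ^+ i) = \sum_(i < n) c i * (f (x ^+ i) : K).
Proof. rewrite linear_sum; apply: eq_bigr => i _; by rewrite linearZ. Qed.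

Lemma ugenP (x a : B) : u_gen x a <-> exists p : {poly K}, a = horner_alg x p.
Proof.
split.
  case=> n [c ->]; exists (\sum_(i < n) c i *: 'X^i).
  rewrite linear_sum; apply: eq_bigr => i _.
  by rewrite linearZ /= mulr_algl rmorphXn /= horner_algX.
by case=> p ->; exists (size p), (fun i => p`_i); exact: hsum.
Qed.

Lemma ugenM (x a b : B) : u_gen x a -> u_gen x b -> u_gen x (a * b).
Proof.
move=> /ugenP [p ->] /ugenP [q ->]; apply/ugenP; exists (p * q).
by rewrite rmorphM.
Qed.

Lemma ugenB1 (x a : B) (c : K) : u_gen x a -> u_gen x (a - c *: 1).
Proof.
move=> /ugenP [p ->]; apply/ugenP; exists (p - c%:P).
by rewrite rmorphB /= horner_algC.
Qed.

Lemma ugenX (x : B) k : u_gen x (x ^+ k).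
Proof. apply/ugenP; exists ('X ^+ k); by rewrite rmorphXn /= horner_algX. Qed.

Lemma Qhorner (x : B) k : (x - 1) ^+ k = horner_alg x (('X - 1) ^+ k).
Proof. by rewrite rmorphXn rmorphB /= rmorph1 horner_algX. Qed.


Lemma psiH (f : {linear B -> K^o}) (x : B) (p : {poly K}) :
  (forall n, f (x ^+ n) = 1) -> f (horner_alg x p) = p.[1].
Proof.
move=> H; rewrite hsum fsum horner_coef; apply: eq_bigr => i _.
by rewrite H expr1n.
Qed.
End Ugen.

Lemma fhorner (K : comNzRingType) (B1 B2 : algType K) (f : {linear B1 -> K^o})
  (g : {linear B2 -> K^o}) (x : B1) (y : B2) (p : {poly K}) :
  (forall n, f (x ^+ n) = g (y ^+ n)) -> f (horner_alg x p) = g (horner_alg y p).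
Proof. by move=> H; rewrite !hsum !fsum; apply: eq_bigr => i _; rewrite H. Qed.

Section Bside.
Variables (K : comNzRingType) (B : algType K) (phi psi : {linear B -> K^o}).
Hypotheses (phi1 : phi 1 = 1) (psi1 : psi 1 = 1).
Variables X Y : B.
Hypothesis HF : cfree_indep phi psi (fam2 (u_gen X) (u_gen Y)).
Hypothesis HnuX : forall n, psi (X ^+ n) = 1.

Local Notation S := (fam2 (u_gen X) (u_gen Y)).
Implicit Types l r t u w : seq (bool * B).

Definition good w := [/\ (forall p, p \in w -> S p.1 p.2),
  (forall p, p \in w -> p.1 = false -> psi p.2 = 0) & altb w].
Definition nc w := count (fun p : bool * B => p.1 && (psi p.2 != 0)) w.

Lemma nc_cat l r : nc (l ++ r) = (nc l + nc r)%N.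
Proof. exact: count_cat. Qed.

Lemma centM a b : u_gen X a -> u_gen X b -> psi a = 0 -> psi b = 0 -> psi (a * b) = 0.
Proof.
move=> /ugenP [p ->] /ugenP [q ->]; rewrite -rmorphM !psiH //.
by rewrite hornerM => -> ->; rewrite mulr0.
Qed.

Lemma good_cat l r : good (l ++ r) -> good l /\ good r.
Proof.
case=> HS Hc /altb_cat /andP[Hl Hr]; split; split=> // p Hp;
  first [apply: HS | apply: Hc]; by rewrite mem_cat Hp ?orbT.
Qed.

Lemma CF w : good w -> (forall p, p \in w -> psi p.2 = 0) ->
  phi (wprod w) = \prod_(p <- w) phi p.2.
Proof.
case: w => [|a w]; first by rewrite wprod_nil phi1 big_nil.
case=> HS _ Ha Hc.
have [] := HF (a :: w); last by [].
split=> //; first by apply/allP => p /Hc /eqP.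
move=> l i1 X1 i2 X2 r E; move: Ha; rewrite E => /altb_adj //.
Qed.

Lemma Hexp l y t : phi (wprod (l ++ (true, y) :: t)) =
  psi y * phi (wprod (mergeW l t)) + phi (wprod (l ++ (true, y - psi y *: 1) :: t)).
Proof.
rewrite mergeW_prod !wprod_cat !wprod_cons /= mulrBl mulrBr linearB /=.
rewrite -scalerAl mul1r -scalerAr linearZ /=.
by rewrite addrC subrK.
Qed.

Lemma good_repl l y y' r : good (l ++ (true, y) :: r) -> u_gen Y y' ->
  good (l ++ (true, y') :: r).
Proof.
case=> HS Hc Ha Hy'; split.
- move=> p; rewrite mem_cat in_cons => /orP [Hp|/orP [/eqP -> //|Hp]];
  by apply: HS; rewrite mem_cat in_cons Hp ?orbT.
- move=> p; rewrite mem_cat in_cons => /orP [Hp|/orP [/eqP -> //|Hp]];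
  by apply: Hc; rewrite mem_cat in_cons Hp ?orbT.
- by rewrite (altb_fst _ _ (true, y') (true, y)).
Qed.

Lemma good_merge l y r : good (l ++ (true, y) :: r) ->
  good (mergeW l r) /\ (nc (mergeW l r) <= nc l + nc r)%N.
Proof.
case/lastP: l => [|u0 a].
  rewrite cat0s -cat1s => /good_cat [_ g]; by split.
rewrite -cats1 mergeW_catl // -catA cat1s => G.
have := G => -[HS Hc Ha].
case: a G HS Hc Ha => a1 a2 G HS Hc Ha.
have a1f : a1 = false by move: (altb_adj Ha) => /=; case: (a1).
subst a1.
case: r G HS Hc Ha => [|[q1 q2] r] G HS Hc Ha /=.
  rewrite -cat1s catA in G; case: (good_cat _ _ G) => g _; split => //.
  by rewrite nc_cat leq_addr.
have q1f : q1 = false.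
  by move: Ha; rewrite -cat1s catA => /altb_adj /=; case: (q1).
subst q1.
have inW : forall p, p \in u0 ++ (false, a2 * q2) :: r ->
  [\/ p \in u0 ++ [:: (false, a2), (true, y), (false, q2) & r], p = (false, a2 * q2)
   | p \in u0 ++ [:: (false, a2), (true, y), (false, q2) & r]].
  move=> p; rewrite mem_cat in_cons => /orP [Hp|/orP [/eqP ->|Hp]].
  - by constructor 1; rewrite mem_cat Hp.
  - by constructor 2.
  - by constructor 3; rewrite mem_cat !in_cons Hp !orbT.
have ina : (false, a2) \in u0 ++ [:: (false, a2), (true, y), (false, q2) & r].
  by rewrite mem_cat in_cons eqxx orbT.
have inq : (false, q2) \in u0 ++ [:: (false, a2), (true, y), (false, q2) & r].
  by rewrite mem_cat !in_cons eqxx !orbT.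
split; first split.
- move=> p /inW [/HS //|->|/HS //] /=.
  by apply: ugenM; [exact: (HS _ ina) | exact: (HS _ inq)].
- move=> p /inW [/Hc //|->|/Hc //] _ /=.
  by apply: centM; [exact: (HS _ ina) | exact: (HS _ inq) | exact: (Hc _ ina) | exact: (Hc _ inq)].
- exact: (altb_merge u0 r (false, a2) (true, y) (false, q2) (false, a2 * q2) erefl erefl Ha).
- by rewrite !nc_cat /nc /= !addn0.
Qed.

Lemma nc_mid l y t : psi y != 0 -> nc (l ++ (true, y) :: t) = (nc l + nc t).+1.
Proof. by move=> H; rewrite nc_cat /nc /= H addnS. Qed.

Lemma nc_mid0 l y t : psi y = 0 -> nc (l ++ (true, y) :: t) = (nc l + nc t)%N.
Proof. by move=> H; rewrite nc_cat /nc /= H eqxx. Qed.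

Lemma good_tl a w : good (a :: w) -> good w.
Proof. by rewrite -cat1s => /good_cat []. Qed.

Lemma Lbase v1 z v2 : nc (v1 ++ (true, z) :: v2) = 0%N -> good (v1 ++ (true, z) :: v2) ->
  phi (wprod (v1 ++ (true, z) :: v2)) = phi (wprod v1) * phi z * phi (wprod v2).
Proof.
move=> H0 G.
have cent : forall p, p \in v1 ++ (true, z) :: v2 -> psi p.2 = 0.
  move=> p Hp; case: G => _ Hc _; case E: p.1; last exact: Hc.
  have H : ~~ has (fun p : bool * B => p.1 && (psi p.2 != 0)) (v1 ++ (true, z) :: v2).
    by rewrite has_count -/(nc _) H0.
  by move: (hasPn H p Hp); rewrite E /= negbK => /eqP.
have [G1 G2] := good_cat _ _ G.
have G3 := good_tl _ _ G2.
rewrite (CF _ G) // (CF _ G1); last by move=> p Hp; apply: cent; rewrite mem_cat Hp.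
rewrite (CF _ G3); last by move=> p Hp; apply: cent; rewrite mem_cat in_cons Hp !orbT.
by rewrite big_cat big_cons /= mulrA.
Qed.

Lemma Lfact n : forall v1 z v2, (nc (v1 ++ (true, z) :: v2) <= n)%N ->
  good (v1 ++ (true, z) :: v2) -> psi z = 0 ->
  phi (wprod (v1 ++ (true, z) :: v2)) = phi (wprod v1) * phi z * phi (wprod v2).
Proof.
elim: n => [|n IH] v1 z v2 Hn G Hz.
  by apply: Lbase => //; move: Hn; rewrite leqn0 => /eqP.
case: (posnP (nc (v1 ++ (true, z) :: v2))) => [H0|Hpos]; first exact: Lbase.
have : has (fun p : bool * B => p.1 && (psi p.2 != 0)) (v1 ++ (true, z) :: v2).
  by rewrite has_count.
case/hasP => -[p1 y] Hp /= /andP [Hp1 Hp2]; move: Hp; rewrite Hp1 => Hp.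
have GY : forall l r, good (l ++ (true, y) :: r) -> u_gen Y y.
  move=> l r [HS _ _]; apply: (HS (true, y)); by rewrite mem_cat in_cons eqxx orbT.
have Hy' : psi (y - psi y *: 1) = 0.
  rewrite linearB linearZ /= psi1 (_ : (psi y)%:A = psi y) ?subrr //; exact: mulr1.
rewrite mem_cat in_cons in Hp; case/orP: Hp => [Hp| /orP [/eqP [Ez] | Hp]].
- case/splitPr: Hp G Hn => l r G Hn.
  rewrite -catA cat_cons in G Hn *.
  have rn : r != [::].
    by case: r G {Hn} => // -[_ _]; rewrite cat0s => /altb_adj.
  rewrite Hexp (Hexp l y r) mergeW_catr //.
  have [Gm Ncm] := good_merge _ _ _ G; rewrite mergeW_catr // in Gm Ncm.
  rewrite nc_mid // in Hn.
  rewrite (IH (mergeW l r) z v2) //; last first.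
    by apply: leq_trans Ncm _.
  have G' := good_repl _ _ _ _ G (@ugenB1 _ _ _ _ (psi y) (GY _ _ G)).
  rewrite -cat_cons catA in G'.
  rewrite -cat_cons catA (IH (l ++ (true, y - psi y *: 1) :: r) z v2) //; last first.
    by rewrite -catA cat_cons nc_mid0.
  ring.
- by move: Hp2; rewrite Ez Hz eqxx.
- case/splitPr: Hp G Hn => l r G Hn.
  have ln : l != [::].
    by case: l G {Hn} => // -[_ _] /altb_adj.
  have EW : v1 ++ (true, z) :: (l ++ (true, y) :: r) = (v1 ++ (true, z) :: l) ++ (true, y) :: r.
    by rewrite -catA.
  rewrite EW in G Hn *.
  have EM : mergeW (v1 ++ (true, z) :: l) r = v1 ++ (true, z) :: mergeW l r.
    by rewrite mergeW_catl // mergeW_cons.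
  rewrite Hexp (Hexp l y r) EM.
  have [Gm Ncm] := good_merge _ _ _ G; rewrite EM in Gm Ncm.
  rewrite nc_mid // in Hn.
  rewrite (IH v1 z (mergeW l r)) //; last first.
    by apply: leq_trans Ncm _.
  have G' := good_repl _ _ _ _ G (@ugenB1 _ _ _ _ (psi y) (GY _ _ G)).
  rewrite -catA cat_cons in G'.
  rewrite -catA cat_cons (IH v1 z (l ++ (true, y - psi y *: 1) :: r)) //; last first.
    by rewrite -cat_cons catA nc_mid0.
  ring.
Qed.

Lemma LL v1 y v2 : good (v1 ++ (true, y) :: v2) ->
  phi (wprod (v1 ++ (true, y) :: v2)) =
  psi y * phi (wprod (mergeW v1 v2)) + phi (wprod v1) * (phi y - psi y) * phi (wprod v2).
Proof.
move=> G; rewrite Hexp.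
have Hy' : psi (y - psi y *: 1) = 0.
  rewrite linearB linearZ /= psi1 (_ : (psi y)%:A = psi y) ?subrr //; exact: mulr1.
have GY : u_gen Y y.
  case: G => HS _ _; apply: (HS (true, y)); by rewrite mem_cat in_cons eqxx orbT.
have G' := good_repl _ _ _ _ G (@ugenB1 _ _ _ _ (psi y) GY).
rewrite (Lfact _ _ _ _ (leqnn _) G' Hy') linearB linearZ /= phi1.
by rewrite (_ : (psi y)%:A = psi y) //; exact: mulr1.
Qed.
End Bside.

Lemma nuX (K : comNzRingType) (A : algType K) (x : A) k : (0 < k)%N -> nu_gen x (x ^+ k).
Proof.
case: k => // k _; exists k.+1, (fun i => (i == k)%:R).
rewrite big_ord_recr /= eqxx scale1r big1 ?add0r // => i _.
by rewrite (ltn_eqF (ltn_ord i)) scale0r.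
Qed.

Fixpoint Sn (n : nat) : seq (seq (bool * nat)) :=
  if n is m.+1 then [seq rcons w (true, 1%N) | w <- Sn m] ++
                    [seq w ++ [:: (false, 1%N); (true, 1%N)] | w <- Sn m]
  else [:: [::]].

Lemma Sn_pos n w : w \in Sn n -> all (fun p : bool * nat => (0 < p.2)%N) w.
Proof.
elim: n w => [|n IH] w /=; first by rewrite inE => /eqP ->.
rewrite mem_cat => /orP [] /mapP [v /IH Hv ->].
  by rewrite all_rcons Hv.
by rewrite all_cat Hv.
Qed.

Lemma expandXY (D : nzRingType) (x y : D) (e : bool * nat -> D) n :
  e (true, 1%N) = y -> e (false, 1%N) = x - 1 ->
  (x * y) ^+ n = \sum_(w <- Sn n) \prod_(p <- w) e p.
Proof.
move=> ey ex; elim: n => [|n IH] /=; first by rewrite big_seq1 big_nil expr0.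
rewrite big_cat !big_map exprSr IH.
have -> : x * y = y + (x - 1) * y by rewrite mulrBl mul1r addrC subrK.
rewrite mulrDr !mulr_suml; congr (_ + _); apply: eq_bigr => w _.
  by rewrite -cats1 big_cat big_seq1 ey.
by rewrite big_cat big_cons big_seq1 /= ex ey mulrA.
Qed.

Section Main.
Variables (K : comNzRingType) (A : algType K) (phi psi : {linear A -> K^o}).
Hypotheses (phi1 : phi 1 = 1) (psi1 : psi 1 = 1).
Variables X Y : A.
Hypothesis HXY : cmon_indep phi psi (fam2 (nu_gen (X - 1)) (nu_gen Y)).
Variables (B : algType K) (phi' psi' : {linear B -> K^o}).
Hypotheses (phi'1 : phi' 1 = 1) (psi'1 : psi' 1 = 1).
Variables X' Y' : B.
Hypothesis HXY' : cfree_indep phi' psi' (fam2 (u_gen X') (u_gen Y')).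
Hypotheses (HmuX : forall n, phi (X ^+ n) = phi' (X' ^+ n))
  (HnuX' : forall n, psi' (X' ^+ n) = 1)
  (HmuY : forall n, phi (Y ^+ n) = phi' (Y' ^+ n))
  (HnuY : forall n, psi (Y ^+ n) = psi' (Y' ^+ n)).

Definition evA (p : bool * nat) : A := if p.1 then Y ^+ p.2 else (X - 1) ^+ p.2.
Definition evB (p : bool * nat) : B := if p.1 then Y' ^+ p.2 else (X' - 1) ^+ p.2.
Definition wA (w : seq (bool * nat)) := [seq (p.1, evA p) | p <- w].
Definition wB (w : seq (bool * nat)) := [seq (p.1, evB p) | p <- w].

Lemma wA_prod w : wprod (wA w) = \prod_(p <- w) evA p.
Proof. by rewrite /wprod big_map. Qed.
Lemma wB_prod w : wprod (wB w) = \prod_(p <- w) evB p.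
Proof. by rewrite /wprod big_map. Qed.

Lemma moment k : phi ((X - 1) ^+ k) = phi' ((X' - 1) ^+ k).
Proof. by rewrite (Qhorner _ _ X) (Qhorner _ _ X'); apply: fhorner. Qed.

Lemma goodB w : altb w -> all (fun p : bool * nat => (0 < p.2)%N) w ->
  good K B psi' X' Y' (wB w).
Proof.
move=> Ha Hp; split; last by rewrite altb_map.
- move=> p /mapP [[[] k] _ ->] /=; first exact: ugenX.
  by rewrite /evB /= Qhorner; apply/ugenP; eexists.
- move=> p /mapP [[[] k] Hq ->] //= _.
  have k0 : (0 < k)%N by move/allP: Hp => /(_ _ Hq).
  rewrite /evB /= Qhorner psiH // horner_exp !hornerE subrr.
  by case: k k0 {Hq} => // k _; rewrite expr0n.
Qed.

Lemma goodA w : all (fun p : bool * nat => (0 < p.2)%N) w ->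
  forall p, p \in wA w -> fam2 (nu_gen (X - 1)) (nu_gen Y) p.1 p.2.
Proof.
move=> Hp p /mapP [[[] k] Hq ->] /=; apply: nuX;
  by move/allP: Hp => /(_ _ Hq).
Qed.


Definition posw (w : seq (bool * nat)) := all (fun p : bool * nat => (0 < p.2)%N) w.

Lemma ruleA1 k k2 r : posw [:: (true, k), (false, k2) & r] ->
  phi (\prod_(p <- [:: (true, k), (false, k2) & r]) evA p) =
  phi (Y ^+ k) * phi (\prod_(p <- (false, k2) :: r) evA p).
Proof.
move=> Hp; have [c1 _ _] := HXY.1 _ (goodA _ Hp).
rewrite -!wA_prod.
exact: (c1 true (Y ^+ k) false ((X - 1) ^+ k2) (wA r) erefl isT).
Qed.

Lemma ruleA2 k k2 : posw [:: (false, k); (true, k2)] ->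
  phi (\prod_(p <- [:: (false, k); (true, k2)]) evA p) =
  phi ((X - 1) ^+ k) * phi (Y ^+ k2).
Proof.
move=> Hp; have [_ c2 _] := HXY.1 _ (goodA _ Hp).
rewrite -!wA_prod.
rewrite (c2 [::] false ((X - 1) ^+ k) true (Y ^+ k2) erefl isT).
by rewrite /= wprod_cons wprod_nil mulr1.
Qed.

Lemma ruleA3 k k2 k3 r : posw [:: (false, k), (true, k2), (false, k3) & r] ->
  phi (\prod_(p <- [:: (false, k), (true, k2), (false, k3) & r]) evA p) =
  (phi (Y ^+ k2) - psi (Y ^+ k2)) * phi ((X - 1) ^+ k) * phi (\prod_(p <- (false, k3) :: r) evA p)
  + psi (Y ^+ k2) * phi (\prod_(p <- (false, (k + k3)%N) :: r) evA p).
Proof.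
move=> Hp; have [_ _ c3] := HXY.1 _ (goodA _ Hp).
rewrite -!wA_prod.
rewrite (c3 [::] false ((X - 1) ^+ k) true (Y ^+ k2) false ((X - 1) ^+ k3) (wA r) erefl isT isT).
rewrite /= !wprod_cons wprod_nil mulr1 mulrA -exprD.
by [].
Qed.

Lemma mergeW1 (a q : bool * B) t : mergeW [:: a] (q :: t) = (a.1, a.2 * q.2) :: t.
Proof. by []. Qed.

Lemma ruleB1 k k2 r : altb [:: (true, k), (false, k2) & r] -> posw [:: (true, k), (false, k2) & r] ->
  phi' (\prod_(p <- [:: (true, k), (false, k2) & r]) evB p) =
  phi' (Y' ^+ k) * phi' (\prod_(p <- (false, k2) :: r) evB p).
Proof.
move=> Ha Hp; have GB := goodB _ Ha Hp.
have LLB := LL _ _ _ _ phi'1 psi'1 _ _ HXY' HnuX'.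
rewrite -!wB_prod.
transitivity (phi' (wprod ([::] ++ (true, Y' ^+ k) :: wB ((false, k2) :: r)))); first by [].
rewrite LLB // wprod_nil phi'1 mul1r.
rewrite (_ : mergeW [::] _ = wB ((false, k2) :: r)) //; ring.
Qed.

Lemma ruleB2 k k2 : altb [:: (false, k); (true, k2)] -> posw [:: (false, k); (true, k2)] ->
  phi' (\prod_(p <- [:: (false, k); (true, k2)]) evB p) =
  phi' ((X' - 1) ^+ k) * phi' (Y' ^+ k2).
Proof.
move=> Ha Hp; have GB := goodB _ Ha Hp.
have LLB := LL _ _ _ _ phi'1 psi'1 _ _ HXY' HnuX'.
rewrite -!wB_prod.
transitivity (phi' (wprod ([:: (false, (X' - 1) ^+ k)] ++ (true, Y' ^+ k2) :: [::]))); first by [].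
rewrite LLB // (_ : mergeW [:: (false, (X' - 1) ^+ k)] [::] = [:: (false, (X' - 1) ^+ k)]) //.
rewrite !wprod_cons !wprod_nil !mulr1 phi'1; ring.
Qed.

Lemma ruleB3 k k2 k3 r : altb [:: (false, k), (true, k2), (false, k3) & r] ->
  posw [:: (false, k), (true, k2), (false, k3) & r] ->
  phi' (\prod_(p <- [:: (false, k), (true, k2), (false, k3) & r]) evB p) =
  (phi' (Y' ^+ k2) - psi' (Y' ^+ k2)) * phi' ((X' - 1) ^+ k) * phi' (\prod_(p <- (false, k3) :: r) evB p)
  + psi' (Y' ^+ k2) * phi' (\prod_(p <- (false, (k + k3)%N) :: r) evB p).
Proof.
move=> Ha Hp; have GB := goodB _ Ha Hp.
have LLB := LL _ _ _ _ phi'1 psi'1 _ _ HXY' HnuX'.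
rewrite -!wB_prod.
transitivity (phi' (wprod ([:: (false, (X' - 1) ^+ k)] ++ (true, Y' ^+ k2) ::
   (false, (X' - 1) ^+ k3) :: wB r))); first by [].
have E1 : wprod [:: (false, (X' - 1) ^+ k)] = (X' - 1) ^+ k.
  by rewrite wprod_cons wprod_nil mulr1.
have E2 : wprod ((false, (X' - 1) ^+ k3) :: wB r) = wprod (wB ((false, k3) :: r)) by [].
have E3 : wprod (mergeW [:: (false, (X' - 1) ^+ k)] ((false, (X' - 1) ^+ k3) :: wB r)) =
  wprod (wB ((false, (k + k3)%N) :: r)).
  by rewrite mergeW1 /= -exprD.
rewrite LLB // E1 E2 E3; ring.
Qed.

Lemma MAIN n : forall w, (size w <= n)%N -> all (fun p : bool * nat => (0 < p.2)%N) w ->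
  phi (\prod_(p <- w) evA p) = phi' (\prod_(p <- w) evB p).
Proof.
elim: n => [|n IH] w Hs Hpos.
  by case: w Hs Hpos => // _ _; rewrite !big_nil phi1 phi'1.
case Halt: (altb w); last first.
  have [l [[b j] [[b2 k] [r [E /= e]]]]] := altb_nalt _ (negbT Halt).
  subst w b2.
  have EA : \prod_(p <- l ++ [:: (b, j), (b, k) & r]) evA p =
            \prod_(p <- l ++ (b, (j + k)%N) :: r) evA p.
    by rewrite !big_cat !big_cons /= /evA /=; case: (b); rewrite exprD !mulrA.
  have EB : \prod_(p <- l ++ [:: (b, j), (b, k) & r]) evB p =
            \prod_(p <- l ++ (b, (j + k)%N) :: r) evB p.
    by rewrite !big_cat !big_cons /= /evB /=; case: (b); rewrite exprD !mulrA.
  rewrite EA EB; apply: IH.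
    by move: Hs; rewrite !size_cat /= addnS ltnS.
  move: Hpos; rewrite !all_cat /= => /and4P [-> j0 k0 ->].
  by rewrite addn_gt0 j0.
case: w Halt Hs Hpos => [|[b k] [|[b2 k2] r]] Halt Hs Hpos.
- by rewrite !big_nil phi1 phi'1.
- rewrite !big_seq1 /evA /evB /=; case: (b); first exact: HmuY.
  exact: moment.
- have Halt' := Halt; move: Halt' => /= /andP [nb Ha2].
  case: b b2 nb Halt Ha2 Hs Hpos => [] [] // _ Halt Ha2 Hs Hpos.
  + rewrite ruleA1 // ruleB1 // HmuY (IH ((false, k2) :: r)) //.
    by case/andP: Hpos.
  + case: r Halt Ha2 Hs Hpos => [|[b3 k3] r] Halt Ha2 Hs Hpos.
      by rewrite ruleA2 // ruleB2 // moment HmuY.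
    have b3f : b3 = false by move: Ha2 => /= /andP []; case: (b3).
    subst b3.
    rewrite ruleA3 // ruleB3 // moment HmuY HnuY.
    move: Hpos => /= /and4P [k0 k20 k30 Hr].
    rewrite !IH //=.
    - by move: Hs => /=; rewrite !ltnS => /ltnW.
    - by rewrite addn_gt0 k0 Hr.
    - by move: Hs => /=; rewrite !ltnS => /ltnW.
    - by rewrite k30 Hr.
Qed.

Lemma final n : phi ((X * Y) ^+ n) = phi' ((X' * Y') ^+ n).
Proof.
rewrite (expandXY _ X Y evA n) // (expandXY _ X' Y' evB n) // !linear_sum.
apply: eq_big_seq => w Hw; exact: (MAIN (size w) w (leqnn _) (Sn_pos _ _ Hw)).
Qed.
End Main.

Theorem proposition3p2 (R : realType)
  (A : algType R[i]) (phi psi : {linear A -> R[i]^o})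
  (phi1 : phi 1 = 1) (psi1 : psi 1 = 1) (X Y : A)
  (HXY : cmon_indep phi psi (fam2 (nu_gen (X - 1)) (nu_gen Y)))
  (B : algType R[i]) (phi' psi' : {linear B -> R[i]^o})
  (phi'1 : phi' 1 = 1) (psi'1 : psi' 1 = 1) (X' Y' : B)
  (HXY' : cfree_indep phi' psi' (fam2 (u_gen X') (u_gen Y')))
  (HmuX : forall n, phi (X ^+ n) = phi' (X' ^+ n))
  (HnuX' : forall n, psi' (X' ^+ n) = 1)
  (HmuY : forall n, phi (Y ^+ n) = phi' (Y' ^+ n))
  (HnuY : forall n, psi (Y ^+ n) = psi' (Y' ^+ n)) :
  forall n, phi ((X * Y) ^+ n) = phi' ((X' * Y') ^+ n).
Proof.
exact: (final _ _ _ _ phi1 _ _ HXY _ _ _ phi'1 psi'1 _ _ HXY' HmuX HnuX' HmuY HnuY).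
Qed.
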